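(* Consider the system \[ \begin{aligned} \dot S_1 &= (S^{(0)}-S_1)D - y_1\mu_1(S_1)X_1,\\ \dot X_1 &= -D_1X_1 + \mu_1(S_1)X_1,\\ \dot S_2 &= -DS_2 + y_2\mu_1(S_1)X_1 - y_3\mu_2(S_2,S_3)X_2,\\ \dot S_3 &= -DS_3 + y_4\mu_1(S_1)X_1,\\ \dot X_2 &= -D_2X_2 + \mu_2(S_2,S_3)X_2, \end{aligned} \] on the nonnegative orthant of $(S_1,X_1,S_2,S_3,X_2)$-space, under the standing assumptions described in the context. If $\lambda_1\ge S^{(0)}$, then $E=(S^{(0)},0,0,0,0)$ is a globally asymptotically stable equilibrium of this system.
   Context: Parameters: $D>0$, $S^{(0)}>0$, $D_i=D+k_i$ with $k_i\ge 0$ ($i=1,2$), and $y_1,y_2,y_3,y_4>0$. The functions $\mu_1,\mu_2$ satisfy: (H1) $\mu_1\in C^1(\mathbb{R}_+)$ and $\mu_1'(S_1)>0$ for all $S_1>0$; (H2) $\mu_1(0)=0$ and $\mu_1(S_1)>0$ for $S_1>0$; (H3) $\mu_2\in C^1(\mathbb{R}^2_+)$ and $\mu_2(S_2,S_3)>0$ if $S_2>0,S_3>0$; (H4) $\lim_{S_3\to\infty}\mu_2(S_2,S_3)=0$ for all $S_2\ge0$; (H5) $\lim_{S_2\to\infty}\mu_2(S_2,S_3)=0$ for all $S_3\ge0$; (H6) $\mu_2(0,S_3)=0$ for all $S_3\ge0$ and $\mu_2(S_2,0)\ge0$ for $S_2>0$; (H7) there is a continuous $\Gamma:\mathbb{R}_+\to\mathbb{R}$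 with $\partial_{S_2}\mu_2(S_2,S_3)>0$ for $S_2<\Gamma(S_3)$ and $<0$ for $S_2>\Gamma(S_3)$. The break-even concentration $\lambda_1$ is the unique positive extended real number with $\mu_1(\lambda_1)=D_1$; if no such number exists, $\lambda_1=+\infty$. *)

(* Defs.v *)
From Stdlib Require Import Reals.
From Coquelicot Require Import Coquelicot.
Open Scope R_scope.

Definition cont_on_nonneg (f : R -> R) : Prop :=
  forall a, 0 <= a -> forall eps, 0 < eps -> exists del, 0 < del /\
    forall u, 0 <= u -> Rabs (u - a) < del -> Rabs (f u - f a) < eps.

Definition cont_on_quadrant (g : R -> R -> R) : Prop :=
  forall a b, 0 <= a -> 0 <= b -> forall eps, 0 < eps -> exists del, 0 < del /\
    forall u v, 0 <= u -> 0 <= v -> Rabs (u - a) < del -> Rabs (v - b) < del ->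
      Rabs (g u v - g a b) < eps.

(** f is C^1 on R_+ with derivative f' : f is continuous on [0,oo),
    differentiable on (0,oo) with derivative f', and f' extends
    continuously to [0,oo) (so f'(0) is the one-sided derivative). *)
Definition C1_nonneg_with (f f' : R -> R) : Prop :=
  cont_on_nonneg f /\ cont_on_nonneg f' /\
  (forall x, 0 < x -> is_derive f x (f' x)).

(** g is C^1 on R_+^2 with partial derivatives d2 (w.r.t. first argument)
    and d3 (w.r.t. second argument): g continuous on the closed quadrant,
    (Frechet) differentiable in the open quadrant with gradient (d2,d3),
    and d2, d3 extend continuously to the closed quadrant. *)
Definition C1_quadrant_with (g d2 d3 : R -> R -> R) : Prop :=
  cont_on_quadrant g /\ cont_on_quadrant d2 /\ cont_on_quadrant d3 /\
  (forall a b, 0 < a -> 0 < b -> differentiable_pt_lim g a b (d2 a b) (d3 a b)).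

Definition is_break_even (mu1 : R -> R) (D1 : R) (l : Rbar) : Prop :=
  (exists x, 0 < x /\ l = Finite x /\ mu1 x = D1) \/
  (l = p_infty /\ ~ (exists x, 0 < x /\ mu1 x = D1)).

Record state := mkState { St1 : R; Xt1 : R; St2 : R; St3 : R; Xt2 : R }.

Definition in_orthant (p : state) : Prop :=
  0 <= St1 p /\ 0 <= Xt1 p /\ 0 <= St2 p /\ 0 <= St3 p /\ 0 <= Xt2 p.

Definition dist5 (p q : state) : R :=
  sqrt ((St1 p - St1 q)^2 + (Xt1 p - Xt1 q)^2 + (St2 p - St2 q)^2
        + (St3 p - St3 q)^2 + (Xt2 p - Xt2 q)^2).

Definition field (D S0 D1 D2 y1 y2 y3 y4 : R) (mu1 : R -> R) (mu2 : R -> R -> R)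
  (p : state) : state :=
  let s1 := St1 p in let x1 := Xt1 p in let s2 := St2 p in
  let s3 := St3 p in let x2 := Xt2 p in
  mkState ((S0 - s1) * D - y1 * mu1 s1 * x1)
          (- D1 * x1 + mu1 s1 * x1)
          (- D * s2 + y2 * mu1 s1 * x1 - y3 * mu2 s2 s3 * x2)
          (- D * s3 + y4 * mu1 s1 * x1)
          (- D2 * x2 + mu2 s2 s3 * x2).

Definition is_solution (F : state -> state) (z : R -> state) : Prop :=
  (forall t, 0 <= t -> in_orthant (z t)) /\
  filterlim (fun t => St1 (z t)) (at_right 0) (locally (St1 (z 0))) /\
  filterlim (fun t => Xt1 (z t)) (at_right 0) (locally (Xt1 (z 0))) /\
  filterlim (fun t => St2 (z t)) (at_right 0) (locally (St2 (z 0))) /\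
  filterlim (fun t => St3 (z t)) (at_right 0) (locally (St3 (z 0))) /\
  filterlim (fun t => Xt2 (z t)) (at_right 0) (locally (Xt2 (z 0))) /\
  (forall t, 0 < t ->
     is_derive (fun s => St1 (z s)) t (St1 (F (z t))) /\
     is_derive (fun s => Xt1 (z s)) t (Xt1 (F (z t))) /\
     is_derive (fun s => St2 (z s)) t (St2 (F (z t))) /\
     is_derive (fun s => St3 (z s)) t (St3 (F (z t))) /\
     is_derive (fun s => Xt2 (z s)) t (Xt2 (F (z t)))).

Definition globally_asymptotically_stable (F : state -> state) (E : state) : Prop :=
  in_orthant E /\ F E = mkState 0 0 0 0 0 /\
  (forall eps, 0 < eps -> exists del, 0 < del /\
     forall z, is_solution F z -> dist5 (z 0) E < del ->
       forall t, 0 <= t -> dist5 (z t) E < eps) /\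
  (forall z, is_solution F z -> is_lim (fun t => dist5 (z t) E) p_infty 0).

(* Main.v *)
Require Import Defs.
From Stdlib Require Import Reals.
From Coquelicot Require Import Coquelicot.
Open Scope R_scope.
From Stdlib Require Import Lra.


Definition rc (f : R -> R) (T : R) : Prop := filterlim f (at_right T) (locally (f T)).

Lemma rc_eps f T : rc f T -> forall eps, 0 < eps -> exists del, 0 < del /\
  forall s, T < s < T + del -> Rabs (f s - f T) < eps.
Proof.
  intros H eps Heps. apply filterlim_locally with (eps := mkposreal eps Heps) in H.
  destruct H as [del Hd]. exists del. split. apply cond_pos.
  intros s Hs. specialize (Hd s). 
  assert (B : ball T del s).
  { unfold ball; simpl; unfold AbsRing_ball, abs, minus, plus, opp; simpl.
    rewrite Rabs_right; lra. }
  specialize (Hd B ltac:(lra)). revert Hd.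
  unfold ball; simpl; unfold AbsRing_ball, abs, minus, plus, opp; simpl. auto.
Qed.

Lemma rc_of_derive f T df : is_derive f T df -> rc f T.
Proof.
  intro H. unfold rc. eapply filterlim_filter_le_1.
  apply filter_le_within.
  apply (ex_derive_continuous (K:=R_AbsRing) (V:=R_NormedModule)). exists df. exact H.
Qed.

Lemma rc_cont f T : (forall x, is_derive f x (Derive f x)) -> rc f T.
Proof. intro H. apply rc_of_derive with (Derive f T). apply H. Qed.

Lemma rc_plus f g T : rc f T -> rc g T -> rc (fun t => f t + g t) T.
Proof.
  intros Hf Hg. unfold rc.
  apply (filterlim_comp_2 f g Rplus Hf Hg).
  apply (filterlim_plus (V := R_NormedModule)).
Qed.

Lemma rc_mult f g T : rc f T -> rc g T -> rc (fun t => f t * g t) T.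
Proof.
  intros Hf Hg. unfold rc.
  apply (filterlim_comp_2 f g Rmult Hf Hg).
  apply (filterlim_mult (K := R_AbsRing)).
Qed.

Lemma rc_const a T : rc (fun _ => a) T.
Proof. unfold rc. apply filterlim_const. Qed.

Lemma rc_ext f g T : (forall t, f t = g t) -> rc f T -> rc g T.
Proof.
  intros E H. unfold rc. rewrite <- E. eapply filterlim_ext. exact E. exact H.
Qed.

Lemma nonincr_step (h h' : R -> R) T :
  (forall t, T < t -> is_derive h t (h' t)) -> (forall t, T < t -> h' t <= 0) ->
  forall s t, T < s -> s <= t -> h t <= h s.
Proof.
  intros Hd Hn s t Hs Hst. destruct (Req_dec s t) as [->|Hne]. lra.
  destruct (MVT_cor2 h h' s t) as [c [Hc1 Hc2]]. lra.
  intros c Hc. apply is_derive_Reals. apply Hd. lra.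
  assert (h' c <= 0) by (apply Hn; lra). nra.
Qed.

Lemma nonincr (h h' : R -> R) T :
  (forall t, T < t -> is_derive h t (h' t)) -> (forall t, T < t -> h' t <= 0) ->
  rc h T -> forall t, T <= t -> h t <= h T.
Proof.
  intros Hd Hn Hr t Ht. destruct (Req_dec t T) as [->|Hne]. lra.
  destruct (Rle_or_lt (h t) (h T)) as [|Hlt]. auto.
  destruct (rc_eps h T Hr (h t - h T)) as [del [Hdel Hs]]. lra.
  set (s := T + Rmin (del/2) ((t-T)/2)).
  assert (Hm1 : Rmin (del/2) ((t-T)/2) <= del/2) by apply Rmin_l.
  assert (Hm2 : Rmin (del/2) ((t-T)/2) <= (t-T)/2) by apply Rmin_r.
  assert (Hm3 : 0 < Rmin (del/2) ((t-T)/2)) by (apply Rmin_glb_lt; lra).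
  specialize (Hs s ltac:(unfold s; lra)).
  assert (h t <= h s) by (apply (nonincr_step h h' T Hd Hn); unfold s; lra).
  apply Rabs_def2 in Hs. lra.
Qed.

Lemma derive_exp_mult (f phi : R -> R) t df dphi :
  is_derive f t df -> is_derive phi t dphi ->
  is_derive (fun s => exp (phi s) * f s) t (exp (phi t) * (dphi * f t + df)).
Proof.
  intros Hf Hp.
  assert (He : is_derive (fun s => exp (phi s)) t (dphi * exp (phi t))).
  { apply (is_derive_comp exp phi t (exp (phi t)) dphi). apply is_derive_exp. exact Hp. }
  pose proof (is_derive_mult (fun s => exp (phi s)) f t _ _ He Hf) as H.
  replace (exp (phi t) * (dphi * f t + df)) with
     (plus (mult (dphi * exp (phi t)) (f t)) (mult (exp (phi t)) df)).
  apply H. intros; apply Rmult_comm.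
  unfold plus, mult; simpl. ring.
Qed.


Lemma exp_small A k eps : 0 < k -> 0 < eps -> exists T, 0 <= T /\ forall u, T <= u -> A * exp (-k * u) <= eps.
Proof.
  intros Hk He. exists (Rabs A / (k * eps)). split.
  apply Rmult_le_pos. apply Rabs_pos. left; apply Rinv_0_lt_compat; nra.
  intros u Hu.
  assert (H1 : 1 + k * u <= exp (k * u)) by apply exp_ineq1_le.
  assert (Hu0 : 0 <= u). { eapply Rle_trans; [|exact Hu]. apply Rmult_le_pos. apply Rabs_pos. left; apply Rinv_0_lt_compat; nra. }
  assert (Hku : Rabs A <= eps * (k * u)).
  { assert (Rabs A = (k*eps) * (Rabs A / (k * eps))) by (field; split; lra).
    rewrite H. replace (eps * (k*u)) with ((k*eps) * u) by ring.
    apply Rmult_le_compat_l; nra. }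
  replace (-k*u) with (- (k*u)) by ring. rewrite exp_Ropp.
  assert (Hpos : 0 < exp (k*u)) by apply exp_pos.
  assert (A <= Rabs A) by apply Rle_abs.
  apply Rmult_le_reg_r with (exp (k*u)). auto.
  rewrite Rmult_assoc, Rinv_l by lra. nra.
Qed.

Lemma comp_lemma (f f' : R -> R) (k G T : R) : 0 < k ->
  (forall t, T < t -> is_derive f t (f' t)) ->
  (forall t, T < t -> f' t <= - k * f t + G) -> rc f T ->
  forall t, T <= t -> f t <= G / k + (f T - G / k) * exp (- k * (t - T)).
Proof.
  intros Hk Hd Hineq Hr t Ht.
  set (h := fun s => exp (k * (s - T)) * (f s - G / k)).
  set (h' := fun s => exp (k * (s - T)) * (k * (f s - G/k) + f' s)).
  assert (Hphi : forall s, is_derive (fun s => k * (s - T)) s k).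
  { intro s. auto_derive. auto. ring. }
  assert (Hg : forall s, T < s -> is_derive (fun s => f s - G / k) s (f' s)).
  { intros s Hs. replace (f' s) with (f' s - 0) by ring.
    apply (is_derive_minus f (fun _ => G/k)). auto. exact (is_derive_const (K:=R_AbsRing) _ _). }
  assert (Hh : forall s, T < s -> is_derive h s (h' s)).
  { intros s Hs. unfold h, h'. apply (derive_exp_mult (fun s => f s - G/k) (fun s => k * (s - T))); auto. }
  assert (Hn : forall s, T < s -> h' s <= 0).
  { intros s Hs. unfold h'. specialize (Hineq s Hs).
    assert (0 < exp (k * (s - T))) by apply exp_pos.
    assert (k * (f s - G / k) + f' s <= 0).
    { replace (k * (f s - G/k)) with (k * f s - G) by (field; lra). lra. }
    nra. }
  assert (Hrh : rc h T).
  { unfold h. apply rc_mult. apply rc_of_derive with (k * exp (k * (T - T))).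
    apply (is_derive_comp exp (fun s => k * (s - T)) T). apply is_derive_exp. apply Hphi.
    apply rc_plus. auto. apply rc_const. }
  pose proof (nonincr h h' T Hh Hn Hrh t Ht) as H. unfold h in H.
  replace (T - T) with 0 in H by ring. rewrite Rmult_0_r, exp_0, Rmult_1_l in H.
  assert (E : exp (k * (t - T)) * exp (- k * (t - T)) = 1).
  { rewrite <- exp_plus. replace (k * (t - T) + - k * (t - T)) with 0 by ring. apply exp_0. }
  assert (0 < exp (- k * (t - T))) by apply exp_pos.
  assert (f t - G / k <= (f T - G / k) * exp (- k * (t - T))).
  { apply Rmult_le_compat_r with (r := exp (- k * (t - T))) in H. 2: lra.
    rewrite Rmult_comm, <- Rmult_assoc, (Rmult_comm _ (exp (k * (t-T)))), E, Rmult_1_l in H. lra. }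
  lra.
Qed.

Lemma decay (f f' : R -> R) (k eta : R) : 0 < k ->
  (forall t, 0 < t -> is_derive f t (f' t)) ->
  (exists T, forall t, T < t -> f' t <= - k * f t + eta) ->
  forall eps, 0 < eps -> exists T', forall t, T' <= t -> f t <= eta / k + eps.
Proof.
  intros Hk Hd [T HT] eps He.
  set (T1 := Rmax T 1).
  assert (HT1 : 1 <= T1 /\ T <= T1) by (split; [apply Rmax_r | apply Rmax_l]).
  destruct (exp_small (f T1 - eta / k) k eps Hk He) as [T2 [HT2 HT2']].
  exists (T1 + T2). intros t Ht.
  assert (H := comp_lemma f f' k eta T1 Hk (fun t Ht => Hd t ltac:(lra))
     (fun t Ht => HT t ltac:(lra)) (rc_of_derive f T1 (f' T1) (Hd T1 ltac:(lra))) t ltac:(lra)).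
  specialize (HT2' (t - T1) ltac:(lra)). lra.
Qed.


Lemma cont_pos f : cont_on_nonneg f -> forall c, 0 < c -> continuity_pt f c.
Proof.
  intros H c Hc. unfold continuity_pt, continue_in, limit1_in, limit_in. simpl. unfold R_dist.
  intros eps He. destruct (H c ltac:(lra) eps He) as [del [Hd Hf]].
  exists (Rmin del c). split. apply Rmin_glb_lt; lra.
  intros x [_ Hx]. assert (Rmin del c <= del) by apply Rmin_l. assert (Rmin del c <= c) by apply Rmin_r.
  apply Hf. apply Rabs_def2 in Hx. lra. lra.
Qed.

Lemma mu1_strict (mu1 mu1' : R -> R) :
  (forall x, 0 < x -> is_derive mu1 x (mu1' x)) -> (forall s, 0 < s -> 0 < mu1' s) ->
  mu1 0 = 0 -> (forall s, 0 < s -> 0 < mu1 s) -> forall a b, 0 <= a < b -> mu1 a < mu1 b.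
Proof.
  intros Hd Hp H0 Hpos a b [Ha Hab]. destruct (Req_dec a 0) as [->|Hne].
  rewrite H0. apply Hpos; lra.
  destruct (MVT_cor2 mu1 mu1' a b Hab) as [c [E Hc]].
  intros c Hc. apply is_derive_Reals. apply Hd. lra.
  assert (0 < mu1' c) by (apply Hp; lra). nra.
Qed.

Lemma mu1_S0 (mu1 mu1' : R -> R) D1 l S0 :
  (forall x, 0 < x -> is_derive mu1 x (mu1' x)) ->
  (forall a b, 0 <= a < b -> mu1 a < mu1 b) -> cont_on_nonneg mu1 -> mu1 0 = 0 ->
  0 < D1 -> 0 < S0 -> is_break_even mu1 D1 l -> Rbar_le (Finite S0) l -> mu1 S0 <= D1.
Proof.
  intros Hd Hs Hc H0 HD1 HS0 Hbe Hle.
  destruct Hbe as [ [x [Hx [El Hmx] ] ] | [El Hno] ]; subst l.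
  - simpl in Hle. destruct Hle as [Hlt | Heq]. rewrite <- Hmx. left; apply Hs; lra. subst; lra.
  - destruct (Rle_or_lt (mu1 S0) D1) as [|Hgt]. auto. exfalso.
    destruct (Hc 0 ltac:(lra) D1 HD1) as [del [Hdel Hdf]].
    set (a := Rmin (del/2) (S0/2)).
    assert (Ha1 : a <= del/2) by apply Rmin_l. assert (Ha2 : a <= S0/2) by apply Rmin_r.
    assert (Ha3 : 0 < a) by (apply Rmin_glb_lt; lra).
    assert (Hma : mu1 a < D1).
    { assert (Hab : Rabs (a - 0) < del) by (rewrite Rminus_0_r, Rabs_right; lra).
      specialize (Hdf a ltac:(lra) Hab). rewrite H0, Rminus_0_r in Hdf.
      apply Rabs_def2 in Hdf. lra. }
    destruct (Ranalysis5.IVT_interv (fun x => mu1 x - D1) a S0) as [z [Hz Ez]].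
    + intros y Hy. apply continuity_pt_minus. apply derivable_continuous_pt.
      exists (mu1' y). apply is_derive_Reals. apply Hd. lra. apply continuity_pt_const. intros u v; reflexivity.
    + lra.
    + lra.
    + lra.
    + apply Hno. exists z. split; lra.
Qed.

Lemma mu1_lip (mu1 mu1' : R -> R) S0 :
  (forall x, 0 < x -> is_derive mu1 x (mu1' x)) -> cont_on_nonneg mu1' -> 0 < S0 ->
  exists L, 0 <= L /\ forall x, 0 <= x <= 1 -> mu1 (S0 + x) - mu1 S0 <= L * x.
Proof.
  intros Hd Hc HS0.
  destruct (continuity_ab_maj mu1' S0 (S0 + 1)) as [Mx [HM HMx]]. lra.
  intros c Hcc. apply cont_pos; auto; lra.
  exists (Rmax 0 (mu1' Mx)). split. apply Rmax_l.
  intros x Hx. destruct (Req_dec x 0) as [->|Hne].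
  rewrite Rplus_0_r. lra.
  destruct (MVT_cor2 mu1 mu1' S0 (S0 + x)) as [c [E Hc']]. lra.
  intros c Hcc. apply is_derive_Reals. apply Hd. lra.
  rewrite E. replace (S0 + x - S0) with x by ring.
  assert (mu1' c <= mu1' Mx) by (apply HM; lra).
  assert (mu1' Mx <= Rmax 0 (mu1' Mx)) by apply Rmax_r. nra.
Qed.

Lemma is_derive_val (f : R -> R) (t l l' : R) : is_derive f t l -> l = l' -> is_derive f t l'.
Proof. intros H ->. exact H. Qed.

Lemma isd_lin (f g : R -> R) (a b c t df dg : R) : is_derive f t df -> is_derive g t dg ->
  is_derive (fun s => a * f s + b * g s + c) t (a * df + b * dg).
Proof.
  intros Hf Hg.
  pose proof (is_derive_plus _ _ t _ _ (is_derive_scal f t a df Hf) (is_derive_scal g t b dg Hg)) as H1.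
  pose proof (is_derive_plus _ _ t _ _ H1 (is_derive_const (K:=R_AbsRing) c t)) as H2.
  eapply is_derive_val. exact H2. unfold plus, zero; simpl. ring.
Qed.

Lemma rc_lin (f g : R -> R) a b c T : rc f T -> rc g T -> rc (fun s => a * f s + b * g s + c) T.
Proof.
  intros Hf Hg. apply rc_plus. apply rc_plus. apply rc_mult. apply rc_const. auto.
  apply rc_mult. apply rc_const. auto. apply rc_const.
Qed.

Lemma comp0 (f f' : R -> R) (k G : R) : 0 < k -> 0 <= G ->
  (forall t, 0 < t -> is_derive f t (f' t)) ->
  (forall t, 0 < t -> f' t <= - k * f t + G) -> rc f 0 ->
  forall t, 0 <= t -> f t <= G / k + Rabs (f 0).
Proof.
  intros Hk HG Hd Hi Hr t Ht.
  pose proof (comp_lemma f f' k G 0 Hk Hd Hi Hr t Ht) as H.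
  assert (0 < exp (-k * (t - 0))) by apply exp_pos.
  assert (exp (-k * (t - 0)) <= 1).
  { rewrite <- exp_0. destruct (Req_dec t 0) as [->|]. right; f_equal; ring.
    left; apply exp_increasing. assert (0 < t) by lra. nra. }
  assert (0 <= G / k) by (apply Rdiv_le_0_compat; lra).
  assert (f 0 <= Rabs (f 0)) by apply Rle_abs.
  set (e := exp (-k * (t - 0))) in *. set (g := G / k) in *.
  destruct (Rle_or_lt 0 (f 0 - g)).
  - assert ((f 0 - g) * e <= (f 0 - g) * 1) by (apply Rmult_le_compat_l; lra). lra.
  - assert ((f 0 - g) * e <= 0 * e) by (apply Rmult_le_compat_r; lra). pose proof (Rabs_pos (f 0)). lra.
Qed.

Record ctx (D S0 k1 k2 y1 y2 y3 y4 : R) (mu1 : R -> R) (mu2 : R -> R -> R)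
  (s1 x1 s2 s3 x2 : R -> R) : Prop := {
  cD : 0 < D; cS0 : 0 < S0; ck1 : 0 <= k1; ck2 : 0 <= k2;
  cy1 : 0 < y1; cy2 : 0 < y2; cy3 : 0 < y3; cy4 : 0 < y4;
  cmu1s : forall a b, 0 <= a < b -> mu1 a < mu1 b;
  cmu10 : mu1 0 = 0;
  cmuS0 : mu1 S0 <= D + k1;
  cmu2 : forall u v, 0 <= u -> 0 <= v -> 0 <= mu2 u v;
  cnn : forall t, 0 <= t -> 0 <= s1 t /\ 0 <= x1 t /\ 0 <= s2 t /\ 0 <= s3 t /\ 0 <= x2 t;
  crc1 : rc s1 0; crc2 : rc x1 0; crc3 : rc s2 0; crc4 : rc s3 0; crc5 : rc x2 0;
  cd1 : forall t, 0 < t -> is_derive s1 t ((S0 - s1 t) * D - y1 * mu1 (s1 t) * x1 t);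
  cd2 : forall t, 0 < t -> is_derive x1 t (- (D + k1) * x1 t + mu1 (s1 t) * x1 t);
  cd3 : forall t, 0 < t -> is_derive s2 t (- D * s2 t + y2 * mu1 (s1 t) * x1 t - y3 * mu2 (s2 t) (s3 t) * x2 t);
  cd4 : forall t, 0 < t -> is_derive s3 t (- D * s3 t + y4 * mu1 (s1 t) * x1 t);
  cd5 : forall t, 0 < t -> is_derive x2 t (- (D + k2) * x2 t + mu2 (s2 t) (s3 t) * x2 t)
}.



Ltac dC C := destruct C as [HD HS0 Hk1 Hk2 Hy1 Hy2 Hy3 Hy4 Hs H0 HS0D Hmu2 Hnn Hr1 Hr2 Hr3 Hr4 Hr5 Hd1 Hd2 Hd3 Hd4 Hd5].

Lemma mu1_mono {D S0 k1 k2 y1 y2 y3 y4 : R} {mu1 : R -> R} {mu2 : R -> R -> R} {s1 x1 s2 s3 x2 : R -> R}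
  (C : ctx D S0 k1 k2 y1 y2 y3 y4 mu1 mu2 s1 x1 s2 s3 x2) :
  forall a b, 0 <= a <= b -> mu1 a <= mu1 b.
Proof.
  dC C. intros a b Hab. destruct (Req_dec a b) as [->|]. lra. left; apply Hs; lra.
Qed.

Lemma mu1_nn {D S0 k1 k2 y1 y2 y3 y4 : R} {mu1 : R -> R} {mu2 : R -> R -> R} {s1 x1 s2 s3 x2 : R -> R}
  (C : ctx D S0 k1 k2 y1 y2 y3 y4 mu1 mu2 s1 x1 s2 s3 x2) :
  forall s, 0 <= s -> 0 <= mu1 s.
Proof.
  intros s Hs. rewrite <- (cmu10 _ _ _ _ _ _ _ _ _ _ _ _ _ _ _ C). apply (mu1_mono C); lra.
Qed.

Lemma key_mu {D S0 k1 k2 y1 y2 y3 y4 : R} {mu1 : R -> R} {mu2 : R -> R -> R} {s1 x1 s2 s3 x2 : R -> R}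
  (C : ctx D S0 k1 k2 y1 y2 y3 y4 mu1 mu2 s1 x1 s2 s3 x2) L (HL0 : 0 <= L)
  (HL : forall x, 0 <= x <= 1 -> mu1 (S0 + x) - mu1 S0 <= L * x) :
  forall s x, 0 <= s -> 0 <= x <= 1 -> s <= S0 + x -> mu1 s - (D + k1) <= L * x.
Proof.
  pose proof (mu1_mono C) as Hm. dC C. intros s x Hs0 Hx Hsx.
  destruct (Rle_or_lt s S0).
  - assert (mu1 s <= mu1 S0) by (apply Hm; lra). nra.
  - specialize (HL (s - S0) ltac:(lra)). replace (S0 + (s - S0)) with s in HL by ring.
    assert (L * (s - S0) <= L * x) by (apply Rmult_le_compat_l; lra). lra.
Qed.

Lemma Zb {D S0 k1 k2 y1 y2 y3 y4 : R} {mu1 : R -> R} {mu2 : R -> R -> R} {s1 x1 s2 s3 x2 : R -> R}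
  (C : ctx D S0 k1 k2 y1 y2 y3 y4 mu1 mu2 s1 x1 s2 s3 x2) :
  forall t, 0 <= t -> s1 t + y1 * x1 t - S0 <= Rmax 0 (s1 0 + y1 * x1 0 - S0) * exp (- D * t).
Proof.
  dC C. intros t Ht.
  set (f := fun t => 1 * s1 t + y1 * x1 t + (- S0)).
  set (f' := fun t => - D * f t + - (y1 * k1 * x1 t)).
  assert (Hd : forall t, 0 < t -> is_derive f t (f' t)).
  { intros u Hu. eapply is_derive_val. apply (isd_lin s1 x1 1 y1 (-S0)). apply Hd1; auto. apply Hd2; auto.
    unfold f', f. ring. }
  assert (Hi : forall t, 0 < t -> f' t <= - D * f t + 0).
  { intros u Hu. unfold f'. destruct (Hnn u ltac:(lra)) as [_ [Hx _]].
    assert (0 <= y1 * k1 * x1 u) by (apply Rmult_le_pos; [apply Rmult_le_pos|]; lra). lra. }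
  assert (Hr : rc f 0) by (apply rc_lin; auto).
  pose proof (comp_lemma f f' D 0 0 HD Hd Hi Hr t Ht) as H.
  replace (0 / D) with 0 in H by (field; lra). replace (t - 0) with t in H by ring.
  assert (0 < exp (-D * t)) by apply exp_pos.
  assert (f 0 <= Rmax 0 (s1 0 + y1 * x1 0 - S0)).
  { unfold f. eapply Rle_trans; [|apply Rmax_r]. lra. }
  unfold f in *. 
  assert ((1 * s1 0 + y1 * x1 0 + - S0 - 0) * exp (- D * t) <= Rmax 0 (s1 0 + y1 * x1 0 - S0) * exp (- D * t))
    by (apply Rmult_le_compat_r; lra).
  lra.
Qed.

Lemma X1b {D S0 k1 k2 y1 y2 y3 y4 : R} {mu1 : R -> R} {mu2 : R -> R -> R} {s1 x1 s2 s3 x2 : R -> R}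
  (C : ctx D S0 k1 k2 y1 y2 y3 y4 mu1 mu2 s1 x1 s2 s3 x2) L (HL0 : 0 <= L)
  (HL : forall x, 0 <= x <= 1 -> mu1 (S0 + x) - mu1 S0 <= L * x) :
  Rmax 0 (s1 0 + y1 * x1 0 - S0) <= 1 ->
  forall t, 0 <= t -> x1 t <= x1 0 * exp (L * Rmax 0 (s1 0 + y1 * x1 0 - S0) / D).
Proof.
  intros Hc1. pose proof (Zb C) as HZ. pose proof (key_mu C L HL0 HL) as Hk. dC C.
  set (c := Rmax 0 (s1 0 + y1 * x1 0 - S0)) in *.
  assert (Hc0 : 0 <= c) by apply Rmax_l.
  set (phi := fun s => (L * c / D) * exp (- D * s)).
  assert (Hphi : forall s, is_derive phi s (- (L * c) * exp (- D * s))).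
  { intro s. unfold phi. auto_derive. auto. field. lra. }
  set (h := fun s => exp (phi s) * x1 s).
  set (h' := fun s => exp (phi s) * (- (L * c) * exp (- D * s) * x1 s + (- (D + k1) * x1 s + mu1 (s1 s) * x1 s))).
  assert (Hhd : forall s, 0 < s -> is_derive h s (h' s)).
  { intros s Hs'. unfold h, h'. apply derive_exp_mult. apply Hd2; auto. apply Hphi. }
  assert (Hn : forall s, 0 < s -> h' s <= 0).
  { intros s Hs'. unfold h'. destruct (Hnn s ltac:(lra)) as [Hs1 [Hx1 _]].
    assert (He : 0 < exp (- D * s)) by apply exp_pos.
    assert (He1 : exp (- D * s) <= 1).
    { rewrite <- exp_0. left. apply exp_increasing. nra. }
    assert (Hce : 0 <= c * exp (- D * s) <= 1) by (split; nra).
    specialize (HZ s ltac:(lra)).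
    assert (Hm : mu1 (s1 s) - (D + k1) <= L * (c * exp (- D * s))) by (apply Hk; nra).
    assert (0 < exp (phi s)) by apply exp_pos.
    assert (- (L * c) * exp (- D * s) * x1 s + (- (D + k1) * x1 s + mu1 (s1 s) * x1 s)
      = x1 s * ((mu1 (s1 s) - (D + k1)) - L * (c * exp (- D * s)))) by ring.
    assert (x1 s * ((mu1 (s1 s) - (D + k1)) - L * (c * exp (- D * s))) <= 0) by nra.
    nra. }
  assert (Hr : rc h 0).
  { unfold h. apply rc_mult; auto. apply rc_of_derive with (- (L * c) * exp (- D * 0) * exp (phi 0)).
    apply (is_derive_comp exp phi 0). apply is_derive_exp. apply Hphi. }
  intros t Ht. pose proof (nonincr h h' 0 Hhd Hn Hr t Ht) as H. unfold h in H.
  assert (Ep : phi 0 = L * c / D) by (unfold phi; rewrite Rmult_0_r, exp_0; ring).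
  rewrite Ep in H.
  assert (Hp : 0 <= phi t).
  { unfold phi. apply Rmult_le_pos. apply Rmult_le_pos. nra. left; apply Rinv_0_lt_compat; lra.
    left; apply exp_pos. }
  assert (1 <= exp (phi t)) by (pose proof (exp_ineq1_le (phi t)); lra).
  destruct (Hnn t Ht) as [_ [Hx _]].
  assert (x1 t <= exp (phi t) * x1 t) by nra. lra.
Qed.

Lemma abs_inv a b : Rabs a <= b -> - b <= a <= b.
Proof. intros H. pose proof (Rle_abs a). pose proof (Rle_abs (-a)). rewrite Rabs_Ropp in H1. lra. Qed.

Lemma exp_mono a b : a <= b -> exp a <= exp b.
Proof. intros [H | E]. left; apply exp_increasing; auto. rewrite E; lra. Qed.

Lemma Stab {D S0 k1 k2 y1 y2 y3 y4 : R} {mu1 : R -> R} {mu2 : R -> R -> R} {s1 x1 s2 s3 x2 : R -> R}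
  (C : ctx D S0 k1 k2 y1 y2 y3 y4 mu1 mu2 s1 x1 s2 s3 x2) L (HL0 : 0 <= L)
  (HL : forall x, 0 <= x <= 1 -> mu1 (S0 + x) - mu1 S0 <= L * x)
  rho (Hrho : forall u v, 0 <= u < rho -> 0 <= v < rho -> mu2 u v <= (D + k2) / 2)
  dl (Hdl0 : 0 <= dl) (Hdl1 : dl * (1 + y1) <= 1)
  (I1 : Rabs (s1 0 - S0) <= dl) (I2 : x1 0 <= dl) (I3 : s2 0 <= dl) (I4 : s3 0 <= dl) (I5 : x2 0 <= dl)
  (R2 : y2 * mu1 (S0 + 1) * exp (L / D) * dl / D + dl < rho)
  (R4 : y4 * mu1 (S0 + 1) * exp (L / D) * dl / D + dl < rho) :
  forall t, 0 <= t ->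
    s1 t - S0 <= (1 + y1) * dl /\
    S0 - s1 t <= y1 * mu1 (S0 + 1) * exp (L / D) * dl / D + dl /\
    x1 t <= exp (L / D) * dl /\
    s2 t <= y2 * mu1 (S0 + 1) * exp (L / D) * dl / D + dl /\
    s3 t <= y4 * mu1 (S0 + 1) * exp (L / D) * dl / D + dl /\
    x2 t <= dl.
Proof.
  pose proof (Zb C) as HZ. pose proof (X1b C L HL0 HL) as HX. pose proof (mu1_mono C) as Hm.
  pose proof (mu1_nn C) as Hmn. dC C.
  set (c := Rmax 0 (s1 0 + y1 * x1 0 - S0)) in *.
  set (A := exp (L / D)) in *. set (M := mu1 (S0 + 1)) in *.
  assert (Hc0 : 0 <= c) by apply Rmax_l.
  destruct (Hnn 0 ltac:(lra)) as [Hs10 [Hx10 [Hs20 [Hs30 Hx20]]]].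
  apply abs_inv in I1.
  assert (Hc : c <= (1 + y1) * dl).
  { apply Rmax_lub. nra. nra. }
  assert (HA : 0 < A) by apply exp_pos.
  assert (HX1 : forall t, 0 <= t -> x1 t <= A * dl).
  { intros t Ht. eapply Rle_trans. apply HX; auto. lra.
    assert (exp (L * c / D) <= A).
    { apply exp_mono. unfold Rdiv. apply Rmult_le_compat_r. left; apply Rinv_0_lt_compat; lra. nra. }
    assert (0 < exp (L * c / D)) by apply exp_pos. nra. }
  assert (HS1 : forall t, 0 <= t -> s1 t <= S0 + c).
  { intros t Ht. specialize (HZ t Ht). destruct (Hnn t Ht) as [_ [Hx _]].
    assert (exp (-D * t) <= 1) by (rewrite <- exp_0; apply exp_mono; nra).
    assert (0 < exp (-D*t)) by apply exp_pos. fold c in HZ. nra. }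
  assert (HM : forall t, 0 <= t -> mu1 (s1 t) <= M).
  { intros t Ht. apply Hm. split. apply Hnn; auto. specialize (HS1 t Ht). lra. }
  assert (HM0 : 0 <= M) by (apply Hmn; lra).
  assert (Hprod : forall a t, 0 <= a -> 0 <= t -> a * mu1 (s1 t) * x1 t <= a * M * A * dl).
  { intros a t Ha Ht. specialize (HM t Ht). specialize (HX1 t Ht).
    destruct (Hnn t Ht) as [Hs1t [Hx _]]. specialize (Hmn (s1 t) Hs1t).
    assert (mu1 (s1 t) * x1 t <= M * (A * dl)) by (apply Rmult_le_compat; lra).
    assert (a * (mu1 (s1 t) * x1 t) <= a * (M * (A * dl))) by (apply Rmult_le_compat_l; lra).
    nra. }
  assert (HG : forall a, 0 <= a -> 0 <= a * M * A * dl).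
  { intros a Ha. repeat apply Rmult_le_pos; lra. }
  assert (HL1 : forall t, 0 <= t -> S0 - s1 t <= y1 * M * A * dl / D + dl).
  { intros t Ht.
    set (f := fun t => -1 * s1 t + 0 * x1 t + S0).
    set (f' := fun t => - D * f t + y1 * mu1 (s1 t) * x1 t).
    assert (Hfd : forall t, 0 < t -> is_derive f t (f' t)).
    { intros u Hu. eapply is_derive_val. apply (isd_lin s1 x1 (-1) 0 S0). apply Hd1; auto. apply Hd2; auto.
      unfold f', f. ring. }
    assert (Hfi : forall t, 0 < t -> f' t <= - D * f t + y1 * M * A * dl).
    { intros u Hu. unfold f'. specialize (Hprod y1 u ltac:(lra) ltac:(lra)). lra. }
    pose proof (comp0 f f' D _ HD (HG y1 ltac:(lra)) Hfd Hfi (rc_lin s1 x1 _ _ _ 0 Hr1 Hr2) t Ht) as H.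
    unfold f in H. assert (Rabs (-1 * s1 0 + 0 * x1 0 + S0) <= dl).
    { apply Rabs_le. lra. } lra. }
  assert (HL3 : forall t, 0 <= t -> s3 t <= y4 * M * A * dl / D + dl).
  { intros t Ht.
    set (f := fun t => 1 * s3 t + 0 * x1 t + 0).
    set (f' := fun t => - D * f t + y4 * mu1 (s1 t) * x1 t).
    assert (Hfd : forall t, 0 < t -> is_derive f t (f' t)).
    { intros u Hu. eapply is_derive_val. apply (isd_lin s3 x1 1 0 0). apply Hd4; auto. apply Hd2; auto.
      unfold f', f. ring. }
    assert (Hfi : forall t, 0 < t -> f' t <= - D * f t + y4 * M * A * dl).
    { intros u Hu. unfold f'. specialize (Hprod y4 u ltac:(lra) ltac:(lra)). lra. }
    pose proof (comp0 f f' D _ HD (HG y4 ltac:(lra)) Hfd Hfi (rc_lin s3 x1 _ _ _ 0 Hr4 Hr2) t Ht) as H.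
    unfold f in H. assert (Rabs (1 * s3 0 + 0 * x1 0 + 0) <= dl).
    { apply Rabs_le. lra. } lra. }
  assert (HL2 : forall t, 0 <= t -> s2 t <= y2 * M * A * dl / D + dl).
  { intros t Ht.
    set (f := fun t => 1 * s2 t + 0 * x1 t + 0).
    set (f' := fun t => - D * f t + y2 * mu1 (s1 t) * x1 t - y3 * mu2 (s2 t) (s3 t) * x2 t).
    assert (Hfd : forall t, 0 < t -> is_derive f t (f' t)).
    { intros u Hu. eapply is_derive_val. apply (isd_lin s2 x1 1 0 0). apply Hd3; auto. apply Hd2; auto.
      unfold f', f. ring. }
    assert (Hfi : forall t, 0 < t -> f' t <= - D * f t + y2 * M * A * dl).
    { intros u Hu. unfold f'. specialize (Hprod y2 u ltac:(lra) ltac:(lra)).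
      destruct (Hnn u ltac:(lra)) as [_ [_ [Hs2 [Hs3 Hx2]]]].
      specialize (Hmu2 _ _ Hs2 Hs3).
      assert (0 <= y3 * mu2 (s2 u) (s3 u) * x2 u) by (repeat apply Rmult_le_pos; lra). lra. }
    pose proof (comp0 f f' D _ HD (HG y2 ltac:(lra)) Hfd Hfi (rc_lin s2 x1 _ _ _ 0 Hr3 Hr2) t Ht) as H.
    unfold f in H. assert (Rabs (1 * s2 0 + 0 * x1 0 + 0) <= dl).
    { apply Rabs_le. lra. } lra. }
  assert (HL5 : forall t, 0 <= t -> x2 t <= dl).
  { intros t Ht.
    assert (Hn : forall u, 0 < u -> (- (D + k2) * x2 u + mu2 (s2 u) (s3 u) * x2 u) <= 0).
    { intros u Hu. destruct (Hnn u ltac:(lra)) as [_ [_ [Hs2 [Hs3 Hx2]]]].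
      assert (mu2 (s2 u) (s3 u) <= (D + k2) / 2).
      { apply Hrho. specialize (HL2 u ltac:(lra)). split; lra.
        specialize (HL3 u ltac:(lra)). split; lra. }
      nra. }
    pose proof (nonincr x2 _ 0 Hd5 Hn Hr5 t Ht). lra. }
  intros t Ht. repeat split; auto.
  specialize (HS1 t Ht). nra.
Qed.

Lemma X1lim {D S0 k1 k2 y1 y2 y3 y4 : R} {mu1 : R -> R} {mu2 : R -> R -> R} {s1 x1 s2 s3 x2 : R -> R}
  (C : ctx D S0 k1 k2 y1 y2 y3 y4 mu1 mu2 s1 x1 s2 s3 x2) L (HL0 : 0 <= L)
  (HL : forall x, 0 <= x <= 1 -> mu1 (S0 + x) - mu1 S0 <= L * x) :
  forall eps, 0 < eps -> exists T, forall t, T <= t -> x1 t <= 3 * eps.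
Proof.
  intros eps He.
  pose proof (Zb C) as HZ. pose proof (key_mu C L HL0 HL) as Hk. pose proof (mu1_mono C) as Hm.
  dC C.
  set (c := Rmax 0 (s1 0 + y1 * x1 0 - S0)) in *.
  assert (Hc0 : 0 <= c) by apply Rmax_l.
  set (ss := Rmax 0 (S0 - y1 * eps / 2)).
  assert (Hss0 : 0 <= ss) by apply Rmax_l.
  assert (Hss1 : S0 - y1 * eps / 2 <= ss) by apply Rmax_r.
  assert (Hss : ss < S0) by (apply Rmax_lub_lt; nra).
  set (ka := (D + k1) - mu1 ss).
  assert (Hka : 0 < ka) by (unfold ka; assert (mu1 ss < mu1 S0) by (apply Hs; lra); lra).
  set (th := Rmin 1 (Rmin (y1 * eps / 2) (ka / (L + 1)))).
  assert (Hth1 : th <= 1) by apply Rmin_l.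
  assert (Hth2 : th <= y1 * eps / 2) by (eapply Rle_trans; [apply Rmin_r|apply Rmin_l]).
  assert (Hth3 : th <= ka / (L + 1)) by (eapply Rle_trans; [apply Rmin_r|apply Rmin_r]).
  assert (Hth0 : 0 < th).
  { apply Rmin_glb_lt. lra. apply Rmin_glb_lt. nra. apply Rdiv_lt_0_compat; lra. }
  assert (HLth : L * th <= ka).
  { assert ((L + 1) * th <= ka).
    { apply Rmult_le_compat_l with (r := L + 1) in Hth3. 2: lra.
      replace ((L + 1) * (ka / (L + 1))) with ka in Hth3 by (field; lra). lra. }
    nra. }
  destruct (exp_small c D th HD Hth0) as [T0 [HT0 HT0']].
  assert (Hdec := decay x1 (fun t => - (D + k1) * x1 t + mu1 (s1 t) * x1 t) ka (2 * ka * eps) Hka Hd2).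
  destruct Hdec with (eps := eps) as [T' HT']; auto.
  { exists T0. intros t Ht.
    destruct (Hnn t ltac:(lra)) as [Hs1 [Hx1 _]].
    specialize (HT0' t ltac:(lra)). specialize (HZ t ltac:(lra)). fold c in HZ.
    assert (0 < exp (- D * t)) by apply exp_pos.
    assert (Hce0 : 0 <= c * exp (- D * t)) by nra.
    destruct (Rle_or_lt eps (x1 t)) as [Hbig|Hsmall].
    - assert (s1 t <= ss) by nra.
      assert (mu1 (s1 t) <= mu1 ss) by (apply Hm; lra).
      assert ((mu1 (s1 t) - (D + k1)) * x1 t <= - ka * x1 t) by (unfold ka; nra).
      nra.
    - assert (Ha : mu1 (s1 t) - (D + k1) <= L * (c * exp (- D * t))) by (apply Hk; nra).
      assert (L * (c * exp (- D * t)) <= L * th) by (apply Rmult_le_compat_l; lra).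
      assert ((mu1 (s1 t) - (D + k1)) * x1 t <= ka * eps).
      { destruct (Rle_or_lt (mu1 (s1 t) - (D + k1)) 0). nra.
        assert ((mu1 (s1 t) - (D + k1)) * x1 t <= ka * x1 t) by (apply Rmult_le_compat_r; lra). nra. }
      nra. }
  exists T'. intros t Ht. specialize (HT' t Ht).
  replace (2 * ka * eps / ka) with (2 * eps) in HT' by (field; lra). lra.
Qed.

Lemma S1bnd {D S0 k1 k2 y1 y2 y3 y4 : R} {mu1 : R -> R} {mu2 : R -> R -> R} {s1 x1 s2 s3 x2 : R -> R}
  (C : ctx D S0 k1 k2 y1 y2 y3 y4 mu1 mu2 s1 x1 s2 s3 x2) :
  forall t, 0 <= t -> s1 t <= S0 + Rmax 0 (s1 0 + y1 * x1 0 - S0) * exp (- D * t).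
Proof.
  pose proof (Zb C) as HZ. dC C. intros t Ht. specialize (HZ t Ht).
  destruct (Hnn t Ht) as [_ [Hx _]]. nra.
Qed.

Lemma S1up {D S0 k1 k2 y1 y2 y3 y4 : R} {mu1 : R -> R} {mu2 : R -> R -> R} {s1 x1 s2 s3 x2 : R -> R}
  (C : ctx D S0 k1 k2 y1 y2 y3 y4 mu1 mu2 s1 x1 s2 s3 x2) :
  forall eps, 0 < eps -> exists T, forall t, T <= t -> s1 t - S0 <= eps.
Proof.
  pose proof (S1bnd C) as HB. pose proof (cD _ _ _ _ _ _ _ _ _ _ _ _ _ _ _ C) as HD.
  intros eps He. destruct (exp_small (Rmax 0 (s1 0 + y1 * x1 0 - S0)) D eps HD He) as [T [HT HT']].
  exists T. intros t Ht. specialize (HB t ltac:(lra)). specialize (HT' t Ht). lra.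
Qed.

Lemma Mbnd {D S0 k1 k2 y1 y2 y3 y4 : R} {mu1 : R -> R} {mu2 : R -> R -> R} {s1 x1 s2 s3 x2 : R -> R}
  (C : ctx D S0 k1 k2 y1 y2 y3 y4 mu1 mu2 s1 x1 s2 s3 x2) :
  exists M, 0 <= M /\ forall t, 0 <= t -> 0 <= mu1 (s1 t) <= M.
Proof.
  pose proof (S1bnd C) as HB. pose proof (mu1_mono C) as Hm. pose proof (mu1_nn C) as Hn. dC C.
  set (c := Rmax 0 (s1 0 + y1 * x1 0 - S0)) in *.
  assert (Hc0 : 0 <= c) by apply Rmax_l.
  exists (mu1 (S0 + c)). split. apply Hn; lra.
  intros t Ht. destruct (Hnn t Ht) as [Hs1 _]. split. apply Hn; auto.
  apply Hm. split; auto. specialize (HB t Ht). fold c in HB.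
  assert (exp (-D * t) <= 1) by (rewrite <- exp_0; apply exp_mono; nra).
  assert (0 < exp (-D*t)) by apply exp_pos. nra.
Qed.

Lemma lin_lim {D S0 k1 k2 y1 y2 y3 y4 : R} {mu1 : R -> R} {mu2 : R -> R -> R} {s1 x1 s2 s3 x2 : R -> R}
  (C : ctx D S0 k1 k2 y1 y2 y3 y4 mu1 mu2 s1 x1 s2 s3 x2) L (HL0 : 0 <= L)
  (HL : forall x, 0 <= x <= 1 -> mu1 (S0 + x) - mu1 S0 <= L * x)
  (f f' : R -> R) y (Hy : 0 < y) (Hfd : forall t, 0 < t -> is_derive f t (f' t))
  (Hfi : forall t, 0 < t -> f' t <= - D * f t + y * mu1 (s1 t) * x1 t) :
  forall eps, 0 < eps -> exists T, forall t, T <= t -> f t <= eps.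
Proof.
  intros eps He.
  destruct (Mbnd C) as [M [HM0 HM]]. pose proof (X1lim C L HL0 HL) as HX.
  pose proof (cD _ _ _ _ _ _ _ _ _ _ _ _ _ _ _ C) as HD.
  pose proof (cnn _ _ _ _ _ _ _ _ _ _ _ _ _ _ _ C) as Hnn.
  set (eta := D * eps / 2).
  set (e1 := eta / (3 * y * (M + 1))).
  assert (He1 : 0 < e1) by (unfold e1, eta; apply Rdiv_lt_0_compat; nra).
  destruct (HX e1 He1) as [T1 HT1].
  destruct (decay f f' D eta HD Hfd) with (eps := eps / 2) as [T2 HT2]. 2: lra.
  { exists (Rmax T1 0). intros t Ht.
    assert (T1 <= t /\ 0 < t) as [Ht1 Ht0].
    { pose proof (Rmax_l T1 0); pose proof (Rmax_r T1 0); split; lra. }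
    specialize (HT1 t Ht1). specialize (Hfi t Ht0). destruct (HM t ltac:(lra)) as [Hm0 Hm1].
    destruct (Hnn t ltac:(lra)) as [_ [Hx _]].
    assert (E : 3 * e1 * (y * (M + 1)) = eta) by (unfold e1; field; nra).
    assert (mu1 (s1 t) * x1 t <= (M + 1) * (3 * e1)) by (apply Rmult_le_compat; lra).
    assert (y * (mu1 (s1 t) * x1 t) <= y * ((M + 1) * (3 * e1))) by (apply Rmult_le_compat_l; lra).
    nra. }
  exists T2. intros t Ht. specialize (HT2 t Ht).
  replace (eta / D) with (eps / 2) in HT2 by (unfold eta; field; lra). lra.
Qed.

Definition ev (P : R -> Prop) := exists T, forall t, T <= t -> P t.

Lemma ev_and P Q : ev P -> ev Q -> ev (fun t => P t /\ Q t).
Proof.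
  intros [T1 H1] [T2 H2]. exists (Rmax T1 T2). intros t Ht.
  pose proof (Rmax_l T1 T2); pose proof (Rmax_r T1 T2). split; [apply H1|apply H2]; lra.
Qed.

Lemma ev_pos P : ev P -> ev (fun t => 0 < t /\ P t).
Proof.
  intros [T H]. exists (Rmax T 1). intros t Ht.
  pose proof (Rmax_l T 1); pose proof (Rmax_r T 1). split. lra. apply H; lra.
Qed.

Lemma Attr {D S0 k1 k2 y1 y2 y3 y4 : R} {mu1 : R -> R} {mu2 : R -> R -> R} {s1 x1 s2 s3 x2 : R -> R}
  (C : ctx D S0 k1 k2 y1 y2 y3 y4 mu1 mu2 s1 x1 s2 s3 x2) L (HL0 : 0 <= L)
  (HL : forall x, 0 <= x <= 1 -> mu1 (S0 + x) - mu1 S0 <= L * x)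
  rho (Hrho0 : 0 < rho) (Hrho : forall u v, 0 <= u < rho -> 0 <= v < rho -> mu2 u v <= (D + k2) / 2) :
  forall eps, 0 < eps -> ev (fun t => Rabs (s1 t - S0) <= eps /\ x1 t <= eps /\ s2 t <= eps /\ s3 t <= eps /\ x2 t <= eps).
Proof.
  pose proof (X1lim C L HL0 HL) as HX. pose proof (S1up C) as HU.
  pose proof (lin_lim C L HL0 HL) as Hlin. dC C.
  assert (E1 : forall eps, 0 < eps -> ev (fun t => x1 t <= eps)).
  { intros eps He. destruct (HX (eps/3) ltac:(lra)) as [T HT]. exists T. intros t Ht.
    specialize (HT t Ht). lra. }
  assert (E2 : forall eps, 0 < eps -> ev (fun t => S0 - s1 t <= eps)).
  { intros eps He.
    destruct (Hlin (fun t => -1 * s1 t + 0 * x1 t + S0) (fun t => - D * (-1 * s1 t + 0 * x1 t + S0) + y1 * mu1 (s1 t) * x1 t) y1 Hy1)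
      with (eps := eps) as [T HT]; auto.
    { intros u Hu. eapply is_derive_val. apply (isd_lin s1 x1 (-1) 0 S0). apply Hd1; auto. apply Hd2; auto. ring. }
    { intros u Hu. lra. }
    exists T. intros t Ht. specialize (HT t Ht). lra. }
  assert (E3 : forall eps, 0 < eps -> ev (fun t => s3 t <= eps)).
  { intros eps He.
    destruct (Hlin s3 (fun t => - D * s3 t + y4 * mu1 (s1 t) * x1 t) y4 Hy4) with (eps := eps) as [T HT]; auto.
    intros u Hu. lra. exists T. auto. }
  assert (E4 : forall eps, 0 < eps -> ev (fun t => s2 t <= eps)).
  { intros eps He.
    destruct (Hlin s2 (fun t => - D * s2 t + y2 * mu1 (s1 t) * x1 t - y3 * mu2 (s2 t) (s3 t) * x2 t) y2 Hy2) with (eps := eps) as [T HT]; auto.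
    intros u Hu. destruct (Hnn u ltac:(lra)) as [_ [_ [Hs2 [Hs3 Hx2]]]].
    specialize (Hmu2 _ _ Hs2 Hs3).
    assert (0 <= y3 * mu2 (s2 u) (s3 u) * x2 u) by (repeat apply Rmult_le_pos; lra). lra.
    exists T. auto. }
  assert (E5 : forall eps, 0 < eps -> ev (fun t => x2 t <= eps)).
  { intros eps He.
    destruct (ev_pos _ (ev_and _ _ (E4 (rho/2) ltac:(lra)) (E3 (rho/2) ltac:(lra)))) as [T HT].
    destruct (decay x2 (fun t => - (D + k2) * x2 t + mu2 (s2 t) (s3 t) * x2 t) ((D + k2) / 2) 0 ltac:(lra) Hd5)
      with (eps := eps) as [T' HT']; auto.
    { exists T. intros t Ht. destruct (HT t ltac:(lra)) as [Ht0 [Hs2 Hs3]].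
      destruct (Hnn t ltac:(lra)) as [_ [_ [Hs2' [Hs3' Hx2]]]].
      assert (mu2 (s2 t) (s3 t) <= (D + k2) / 2) by (apply Hrho; lra). nra. }
    exists T'. intros t Ht. specialize (HT' t Ht). replace (0 / ((D + k2) / 2)) with 0 in HT' by (field; lra). lra. }
  intros eps He.
  destruct (ev_and _ _ (HU eps He) (ev_and _ _ (E2 eps He) (ev_and _ _ (E1 eps He) (ev_and _ _ (E4 eps He) (ev_and _ _ (E3 eps He) (E5 eps He)))))) as [T HT].
  exists T. intros t Ht. destruct (HT t Ht) as [A1 [A2 [A3 [A4 [A5 A6]]]]].
  repeat split; auto. apply Rabs_le. lra.
Qed.


Lemma abs_le_sqrt a X : a ^ 2 <= X -> Rabs a <= sqrt X.
Proof.
  intro H. rewrite <- sqrt_Rsqr_abs. apply sqrt_le_1_alt. unfold Rsqr. lra.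
Qed.

Lemma dist_each p q dl : dist5 p q < dl ->
  Rabs (St1 p - St1 q) <= dl /\ Rabs (Xt1 p - Xt1 q) <= dl /\ Rabs (St2 p - St2 q) <= dl /\
  Rabs (St3 p - St3 q) <= dl /\ Rabs (Xt2 p - Xt2 q) <= dl.
Proof.
  unfold dist5. intros H.
  set (a1 := St1 p - St1 q) in *. set (a2 := Xt1 p - Xt1 q) in *. set (a3 := St2 p - St2 q) in *.
  set (a4 := St3 p - St3 q) in *. set (a5 := Xt2 p - Xt2 q) in *.
  assert (0 <= a1^2) by nra. assert (0 <= a2^2) by nra. assert (0 <= a3^2) by nra.
  assert (0 <= a4^2) by nra. assert (0 <= a5^2) by nra.
  repeat split; (eapply Rle_trans; [apply abs_le_sqrt|left; exact H]); lra.
Qed.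

Lemma dist_small p q e eps : 0 <= e -> 0 < eps -> 5 * e ^ 2 < eps ^ 2 ->
  Rabs (St1 p - St1 q) <= e -> Rabs (Xt1 p - Xt1 q) <= e -> Rabs (St2 p - St2 q) <= e ->
  Rabs (St3 p - St3 q) <= e -> Rabs (Xt2 p - Xt2 q) <= e -> dist5 p q < eps.
Proof.
  intros He Heps H5 B1 B2 B3 B4 B5. unfold dist5.
  apply abs_inv in B1, B2, B3, B4, B5.
  set (a1 := St1 p - St1 q) in *. set (a2 := Xt1 p - Xt1 q) in *. set (a3 := St2 p - St2 q) in *.
  set (a4 := St3 p - St3 q) in *. set (a5 := Xt2 p - Xt2 q) in *.
  assert (a1^2 <= e^2) by nra. assert (a2^2 <= e^2) by nra. assert (a3^2 <= e^2) by nra.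
  assert (a4^2 <= e^2) by nra. assert (a5^2 <= e^2) by nra.
  assert (0 <= a1^2) by nra. assert (0 <= a2^2) by nra. assert (0 <= a3^2) by nra.
  assert (0 <= a4^2) by nra. assert (0 <= a5^2) by nra.
  rewrite <- (sqrt_pow2 eps) by lra. apply sqrt_lt_1_alt. split; lra.
Qed.

Lemma mk_ctx (D S0 k1 k2 y1 y2 y3 y4 : R) (mu1 : R -> R) (mu2 : R -> R -> R) z :
  0 < D -> 0 < S0 -> 0 <= k1 -> 0 <= k2 -> 0 < y1 -> 0 < y2 -> 0 < y3 -> 0 < y4 ->
  (forall a b, 0 <= a < b -> mu1 a < mu1 b) -> mu1 0 = 0 -> mu1 S0 <= D + k1 ->
  (forall u v, 0 <= u -> 0 <= v -> 0 <= mu2 u v) ->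
  is_solution (field D S0 (D + k1) (D + k2) y1 y2 y3 y4 mu1 mu2) z ->
  ctx D S0 k1 k2 y1 y2 y3 y4 mu1 mu2 (fun t => St1 (z t)) (fun t => Xt1 (z t))
    (fun t => St2 (z t)) (fun t => St3 (z t)) (fun t => Xt2 (z t)).
Proof.
  intros HD HS0 Hk1 Hk2 Hy1 Hy2 Hy3 Hy4 Hs H0 HS0D Hmu2 [Hor [R1 [R2 [R3 [R4 [R5 Hder]]]]]].
  constructor; auto.
  all: intros t Ht; first [apply Hor; lra | apply (Hder t Ht)].
Qed.

Theorem proposition2p2
  (D S0 k1 k2 y1 y2 y3 y4 : R) (mu1 : R -> R) (mu2 : R -> R -> R)
  (mu1' : R -> R) (d2mu2 d3mu2 : R -> R -> R) (Gamma : R -> R) (lambda1 : Rbar)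
  (HD : 0 < D) (HS0 : 0 < S0) (Hk1 : 0 <= k1) (Hk2 : 0 <= k2)
  (Hy1 : 0 < y1) (Hy2 : 0 < y2) (Hy3 : 0 < y3) (Hy4 : 0 < y4)
  (H1 : C1_nonneg_with mu1 mu1' /\ forall s, 0 < s -> 0 < mu1' s)
  (H2 : mu1 0 = 0 /\ forall s, 0 < s -> 0 < mu1 s)
  (H3 : C1_quadrant_with mu2 d2mu2 d3mu2 /\
        forall s2 s3, 0 < s2 -> 0 < s3 -> 0 < mu2 s2 s3)
  (H4 : forall s2, 0 <= s2 -> is_lim (fun s3 => mu2 s2 s3) p_infty 0)
  (H5 : forall s3, 0 <= s3 -> is_lim (fun s2 => mu2 s2 s3) p_infty 0)
  (H6 : (forall s3, 0 <= s3 -> mu2 0 s3 = 0) /\ (forall s2, 0 < s2 -> 0 <= mu2 s2 0))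
  (H7 : continuous_on (fun x => 0 <= x) Gamma /\
        forall s2 s3, 0 <= s2 -> 0 <= s3 ->
          (s2 < Gamma s3 -> 0 < d2mu2 s2 s3) /\ (Gamma s3 < s2 -> d2mu2 s2 s3 < 0))
  (Hlambda1 : is_break_even mu1 (D + k1) lambda1)
  (Hge : Rbar_le (Finite S0) lambda1) :
  globally_asymptotically_stable
    (field D S0 (D + k1) (D + k2) y1 y2 y3 y4 mu1 mu2)
    (mkState S0 0 0 0 0).
Proof.
  destruct H1 as [[Hc1 [Hc1' Hd1]] Hp1]. destruct H2 as [H20 H2p].
  destruct H3 as [[Hc2 _] H3p]. destruct H6 as [H6a H6b].
  pose proof (mu1_strict mu1 mu1' Hd1 Hp1 H20 H2p) as Hs.
  pose proof (mu1_S0 mu1 mu1' (D + k1) lambda1 S0 Hd1 Hs Hc1 H20 ltac:(lra) HS0 Hlambda1 Hge) as HS0D.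
  destruct (mu1_lip mu1 mu1' S0 Hd1 Hc1' HS0) as [L [HL0 HL]].
  assert (Hmu2 : forall u v, 0 <= u -> 0 <= v -> 0 <= mu2 u v).
  { intros u v Hu Hv. destruct (Req_dec u 0) as [->|Hu0]. rewrite H6a; lra.
    destruct (Req_dec v 0) as [->|Hv0]. apply H6b; lra. left; apply H3p; lra. }
  assert (H00 : mu2 0 0 = 0) by (apply H6a; lra).
  destruct (Hc2 0 0 ltac:(lra) ltac:(lra) ((D + k2) / 2) ltac:(lra)) as [rho [Hrho0 Hrho']].
  assert (Hrho : forall u v, 0 <= u < rho -> 0 <= v < rho -> mu2 u v <= (D + k2) / 2).
  { intros u v Hu Hv. specialize (Hrho' u v ltac:(lra) ltac:(lra)).
    rewrite !Rminus_0_r, H00, Rminus_0_r in Hrho'. rewrite !Rabs_right in Hrho' by lra.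
    specialize (Hrho' ltac:(lra) ltac:(lra)). pose proof (Rle_abs (mu2 u v)). lra. }
  pose proof (fun z => mk_ctx D S0 k1 k2 y1 y2 y3 y4 mu1 mu2 z HD HS0 Hk1 Hk2 Hy1 Hy2 Hy3 Hy4 Hs H20 HS0D Hmu2) as MK.
  unfold globally_asymptotically_stable. split; [|split; [|split]].
  - unfold in_orthant; simpl; lra.
  - unfold field; simpl. rewrite H00. f_equal; ring.
  - intros eps Heps.
    set (e := eps / 3). set (A := exp (L / D)). set (M := mu1 (S0 + 1)).
    assert (HA : 0 < A) by apply exp_pos.
    assert (HM : 0 < M) by (apply H2p; lra).
    set (P1 := y1 * M * A / D). set (P2 := y2 * M * A / D). set (P4 := y4 * M * A / D).
    assert (HP1 : 0 <= P1) by (unfold P1; apply Rmult_le_pos; [left; repeat apply Rmult_lt_0_compat; lra | left; apply Rinv_0_lt_compat; lra]).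
    assert (HP2 : 0 <= P2) by (unfold P2; apply Rmult_le_pos; [left; repeat apply Rmult_lt_0_compat; lra | left; apply Rinv_0_lt_compat; lra]).
    assert (HP4 : 0 <= P4) by (unfold P4; apply Rmult_le_pos; [left; repeat apply Rmult_lt_0_compat; lra | left; apply Rinv_0_lt_compat; lra]).
    set (m := Rmin 1 (Rmin e rho) / 2).
    assert (Hm1 : m <= 1/2) by (unfold m; pose proof (Rmin_l 1 (Rmin e rho)); lra).
    assert (Hm2 : m <= e/2) by (unfold m; pose proof (Rmin_r 1 (Rmin e rho)); pose proof (Rmin_l e rho); lra).
    assert (Hm3 : m <= rho/2) by (unfold m; pose proof (Rmin_r 1 (Rmin e rho)); pose proof (Rmin_r e rho); lra).
    assert (Hm0 : 0 < m) by (unfold m; assert (0 < Rmin 1 (Rmin e rho)) by (repeat apply Rmin_glb_lt; unfold e; lra); lra).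
    set (K := 2 + y1 + A + P1 + P2 + P4).
    assert (HK : 0 < K) by (unfold K; lra).
    set (dl := m / K).
    assert (Hdl : 0 < dl) by (unfold dl; apply Rdiv_lt_0_compat; lra).
    assert (HdK : dl * K = m) by (unfold dl; field; lra).
    assert (Hq : forall q, q <= K -> dl * q <= m).
    { intros q Hq. rewrite <- HdK. apply Rmult_le_compat_l; lra. }
    exists dl. split. auto.
    intros z Hz Hd0 t Ht.
    pose proof (MK z Hz) as C.
    destruct (dist_each _ _ _ Hd0) as [I1 [I2 [I3 [I4 I5]]]]. simpl in I1, I2, I3, I4, I5.
    rewrite Rminus_0_r in I2, I3, I4, I5.
    apply abs_inv in I2, I3, I4, I5.
    assert (Q1 := Hq (1 + y1) ltac:(unfold K; lra)).
    assert (Q2 := Hq (P1 + 1) ltac:(unfold K; lra)).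
    assert (Q3 := Hq A ltac:(unfold K; lra)).
    assert (Q4 := Hq (P2 + 1) ltac:(unfold K; lra)).
    assert (Q5 := Hq (P4 + 1) ltac:(unfold K; lra)).
    assert (Q6 := Hq 1 ltac:(unfold K; lra)).
    assert (E2 : y2 * mu1 (S0 + 1) * exp (L / D) * dl / D + dl = dl * (P2 + 1)) by (unfold P2, M, A; field; lra).
    assert (E4 : y4 * mu1 (S0 + 1) * exp (L / D) * dl / D + dl = dl * (P4 + 1)) by (unfold P4, M, A; field; lra).
    assert (E1 : y1 * mu1 (S0 + 1) * exp (L / D) * dl / D + dl = dl * (P1 + 1)) by (unfold P1, M, A; field; lra).
    destruct (Stab C L HL0 HL rho Hrho dl ltac:(lra) ltac:(lra) I1 ltac:(lra) ltac:(lra) ltac:(lra) ltac:(lra)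
      ltac:(rewrite E2; lra) ltac:(rewrite E4; lra) t Ht) as [B1 [B2 [B3 [B4 [B5 B6]]]]].
    rewrite E1 in B2. rewrite E2 in B4. rewrite E4 in B5. fold A in B3.
    destruct Hz as [Hor _]. destruct (Hor t Ht) as [O1 [O2 [O3 [O4 O5]]]].
    apply (dist_small _ _ e); simpl; try (unfold e; lra); try (rewrite Rminus_0_r, Rabs_right; lra).
    all: try (apply Rabs_le; lra).
    unfold e. nra.
  - intros z Hz. pose proof (Attr (MK z Hz) L HL0 HL rho Hrho0 Hrho) as HA.
    apply is_lim_spec. intros eps. simpl.
    destruct eps as [eps Heps]; simpl.
    destruct (HA (eps / 3) ltac:(lra)) as [T HT]. exists (Rmax T 0). intros t Ht.
    pose proof (Rmax_l T 0); pose proof (Rmax_r T 0).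
    destruct (HT t ltac:(lra)) as [B1 [B2 [B3 [B4 B5]]]]. simpl in B1, B2, B3, B4, B5.
    destruct Hz as [Hor _]. destruct (Hor t ltac:(lra)) as [O1 [O2 [O3 [O4 O5]]]].
    rewrite Rminus_0_r, Rabs_right by (apply Rle_ge, sqrt_pos).
    apply (dist_small _ _ (eps / 3)); simpl; try lra; try (rewrite Rminus_0_r, Rabs_right; lra).
    nra.
Qed.
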